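(* Let $\Bbbk$ be a field of characteristic $0$, $n\ge3$, and let $(A,\mu,(\alpha_1,\ldots,\alpha_{n-1}))$ be an $n$-ary totally Hom-associative algebra over $\Bbbk$, with $\mu(x_1,\ldots,x_n)=(x_1\cdots x_n)$. Suppose there exist $a_1,\ldots,a_k\in A$ for some $k\le n-2$ such that (1) $\alpha_{n-i}(a_i)=a_i$ for all $i\in\{1,\ldots,k\}$, and (2) $(x_1,\ldots,x_{n-i},a_i,a_{i-1},\ldots,a_1)=(x_1,\ldots,x_{n-i-1},a_i,x_{n-i},a_{i-1},\ldots,a_1)$ for all $i\in\{1,\ldots,k\}$ and all $x_j\in A$. Define the $(n-k)$-ary product $(x_1,\ldots,x_{n-k})^k=(x_1,\ldots,x_{n-k},a_k,a_{k-1},\ldots,a_1)$. Then $A_k=(A,(\cdot)^k,(\alpha_1,\ldots,\alpha_{n-1-k}))$ is an $(n-k)$-ary totally Hom-associative algebra. Moreover, if $A$ is multiplicative, then so is $A_k$.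
   Context: An $m$-ary Hom-algebra $(V,\mu,(\alpha_1,\ldots,\alpha_{m-1}))$ is a vector space $V$ with an $m$-linear map $\mu$ (written $\mu(a_1,\ldots,a_m)=(a_1\cdots a_m)$) and linear maps $\alpha_i\colon V\to V$. It is multiplicative if all $\alpha_i$ equal one map $\alpha$ and $\alpha\circ\mu=\mu\circ\alpha^{\otimes m}$. It is $m$-ary totally Hom-associative if for every $i\in\{1,\ldots,m-1\}$ and all $a_1,\ldots,a_{2m-1}$: $(\alpha_1(a_1),\ldots,\alpha_{i-1}(a_{i-1}),(a_i\cdots a_{i+m-1}),\alpha_i(a_{i+m}),\ldots,\alpha_{m-1}(a_{2m-1}))=(\alpha_1(a_1),\ldots,\alpha_i(a_i),(a_{i+1}\cdots a_{i+m}),\alpha_{i+1}(a_{i+m+1}),\ldots,\alpha_{m-1}(a_{2m-1}))$. *)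

(* Defs.v *)
From HB Require Import structures.
From mathcomp Require Import all_boot all_order all_algebra.
Set Implicit Arguments. Unset Strict Implicit. Unset Printing Implicit Defensive.
Import GRing.Theory.
Local Open Scope ring_scope.

(* The twisting maps
   alpha_1, ..., alpha_{m-1} are encoded as alpha : nat -> V -> V, of which
   only the values at indices 1 .. m-1 are used.  Positions in tuples are
   0-based in Rocq (position j <-> paper position j+1). *)

Section HomAlg.
Variables (K : fieldType) (V : lmodType K).

Definition is_linear_map (f : V -> V) : Prop :=
  forall (c : K) (u v : V), f (c *: u + v) = c *: f u + f v.

Definition multilinear (m : nat) (mu : m.-tuple V -> V) : Prop :=
  forall (x : 'I_m -> V) (i : 'I_m) (c : K) (u v : V),
    mu [tuple (if j == i then c *: u + v else x j) | j < m]
    = c *: mu [tuple (if j == i then u else x j) | j < m]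
      + mu [tuple (if j == i then v else x j) | j < m].

Definition hom_algebra (m : nat) (mu : m.-tuple V -> V) (alpha : nat -> V -> V)
  : Prop :=
  multilinear mu /\ (forall j, (1 <= j <= m.-1)%N -> is_linear_map (alpha j)).

(* The argument tuple
   (alpha_1(a_1),...,alpha_{i-1}(a_{i-1}), (a_i ... a_{i+m-1}),
    alpha_i(a_{i+m}),...,alpha_{m-1}(a_{2m-1})),
   i.e. paper position p (= j+1) holds alpha_p(a_p) if p < i, the inner
   product if p = i, and alpha_{p-1}(a_{p+m-1}) if p > i. *)
Definition assoc_args (m : nat) (mu : m.-tuple V -> V) (alpha : nat -> V -> V)
  (a : nat -> V) (i : nat) : m.-tuple V :=
  [tuple (if (j.+1 < i)%N then alpha j.+1 (a j.+1)
          else if j.+1 == i then mu [tuple a (i + l)%N | l < m]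
          else alpha (nat_of_ord j) (a (j + m)%N)) | j < m].

(* m-ary total Hom-associativity: for every i in {1,...,m-1} the i-th and
   (i+1)-th bracketings agree (the right-hand side of the paper's identity
   is exactly assoc_args ... (i+1)). *)
Definition total_hom_assoc (m : nat) (mu : m.-tuple V -> V)
  (alpha : nat -> V -> V) : Prop :=
  forall (i : nat) (a : nat -> V), (1 <= i <= m.-1)%N ->
    mu (assoc_args mu alpha a i) = mu (assoc_args mu alpha a i.+1).

Definition total_hom_assoc_algebra (m : nat) (mu : m.-tuple V -> V)
  (alpha : nat -> V -> V) : Prop :=
  hom_algebra mu alpha /\ total_hom_assoc mu alpha.

Definition hom_multiplicative (m : nat) (mu : m.-tuple V -> V)
  (alpha : nat -> V -> V) : Prop :=
  exists f : V -> V,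
    (forall j, (1 <= j <= m.-1)%N -> alpha j = f) /\
    (forall x : m.-tuple V, f (mu x) = mu (map_tuple f x)).

(* The induced (n-k)-ary product
   (x_1,...,x_{n-k})^k = (x_1,...,x_{n-k}, a_k, a_{k-1}, ..., a_1):
   paper position p > n-k holds a_{n-p+1}. *)
Definition induced_op {n : nat} (k : nat) (mu : n.-tuple V -> V) (a : nat -> V)
  (x : (n - k).-tuple V) : V :=
  mu [tuple (if (j < n - k)%N then nth 0 x j else a (n - j)%N) | j < n].

End HomAlg.
Arguments induced_op {K V n} k mu a x.

(* Main.v *)
Require Import Defs.
From HB Require Import structures.
From mathcomp Require Import all_boot all_order all_algebra.
From mathcomp Require Import zify.
Import GRing.Theory.
Local Open Scope ring_scope.

Lemma nthT (V : Type) (x0 : V) m (F : 'I_m -> V) j (H : (j < m)%N) :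
  nth x0 [tuple F l | l < m] j = F (Ordinal H).
Proof. exact: (nth_mktuple F x0 (Ordinal H)). Qed.

Arguments nthT {V} x0 {m F j} H.

Ltac dec := repeat (case: ifP => /=; move=> ?).

Section S.
Variables (K : fieldType) (V : lmodType K) (n k : nat) (mu : n.-tuple V -> V)
  (alpha : nat -> V -> V) (a : nat -> V).
Hypothesis n3 : (3 <= n)%N.
Hypothesis kn : (k <= n - 2)%N.
Hypothesis H2 : forall i, (1 <= i <= k)%N -> forall x : nat -> V,
     mu [tuple (if (j.+1 <= n - i)%N then x j.+1 else a (n - j)%N) | j < n]
     = mu [tuple (if (j.+1 < n - i)%N then x j.+1
                  else if j.+1 == (n - i)%N then a i
                  else if j.+1 == (n - i).+1 then x (n - i)%N
                  else a (n - j)%N) | j < n].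

Definition stf (y : nat -> V) (z : V) (t : nat) (j : nat) : V :=
  if (j < n - k - 1)%N then y j
          else if (j < n - 1 - t)%N then a (n - 1 - j)%N
          else if j == (n - 1 - t)%N then z else a (n - j)%N.

Lemma st_step y z t : (t < k)%N ->
  mu [tuple stf y z t j | j < n] = mu [tuple stf y z t.+1 j | j < n].
Proof.
move=> tk.
have := H2 (t.+1) _ (fun p => stf y z t.+1 p.-1).
rewrite /= tk => /(_ isT) E.
symmetry; etransitivity; last etransitivity; [|exact: E|].
  congr mu; apply: eq_mktuple => j /=.
  have hj := ltn_ord j.
  clear E H2; rewrite /stf; dec; try done; try lia; try (congr a; lia); try (congr y; lia).
congr mu; apply: eq_mktuple => j /=.
have hj := ltn_ord j.
clear E H2; rewrite /stf; dec; try done; try lia; try (congr a; lia); try (congr y; lia).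
Qed.

Lemma st_all y z t : (t <= k)%N ->
  mu [tuple stf y z 0 j | j < n] = mu [tuple stf y z t j | j < n].
Proof.
elim: t => [//|t IH] tk.
rewrite IH; last lia.
apply: st_step; lia.
Qed.


Lemma ind_eq (F : 'I_n -> V) (t : (n - k).-tuple V) :
  (forall j : 'I_n, F j = if (j < n - k)%N then nth 0 t j else a (n - j)%N) ->
  mu [tuple F j | j < n] = induced_op k mu a t.
Proof. by move=> h; rewrite /induced_op; congr mu; apply: eq_mktuple. Qed.

Hypothesis H1 : forall i, (1 <= i <= k)%N -> alpha (n - i)%N (a i) = a i.
Hypothesis HA : total_hom_assoc mu alpha.

Definition bf (i : nat) (a' : nat -> V) (p : nat) : V :=
  if (p < i + (n - k))%N then a' p
  else if (p < i + n)%N then a (i + n - p)%N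
  else if (p < (n - k) + n)%N then a' (p + (n - k) - n)%N
  else a (2 * n - p)%N.

Lemma alpha_a (j : nat) : (n - k <= j < n)%N -> alpha j (a (n - j)%N) = a (n - j)%N.
Proof.
move=> hj.
have E : j = (n - (n - j))%N by lia.
rewrite {1}E H1 //; lia.
Qed.

Lemma assoc_ind : total_hom_assoc (induced_op k mu a) alpha.
Proof.
move=> i a' hi.
have hi' : (1 <= i <= n.-1)%N by lia.
have := HA i (bf i a') hi'.
move=> E.
transitivity (mu (assoc_args mu alpha (bf i a') i)).
  symmetry; apply: ind_eq => j /=.
  have hj := ltn_ord j.
  case: (ltnP j (n - k)) => hjm.
    rewrite (nthT _ hjm) /=.
    case: ifP => c1.
      rewrite /bf ifT //; lia.
    case: ifP => c2.
      apply: ind_eq => l /=.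
      have hl := ltn_ord l.
      case: (ltnP l (n - k)) => hlm.
        rewrite (nthT _ hlm) /= /bf ifT //; lia.
      rewrite /bf ifF; last lia.
      rewrite ifT; last lia.
      congr a; lia.
    rewrite /bf ifF; last lia.
    rewrite ifF; last lia.
    rewrite ifT; last lia.
    congr (alpha _ (a' _)); lia.
  rewrite ifF; last lia.
  rewrite ifF; last lia.
  rewrite /bf ifF; last lia.
  rewrite ifF; last lia.
  rewrite ifF; last lia.
  have -> : (2 * n - (j + n) = n - j)%N by lia.
  apply: alpha_a; lia.
rewrite E.
apply: ind_eq => j /=.
have hj := ltn_ord j.
case: (ltnP j (n - k)) => hjm.
  rewrite (nthT _ hjm) /=.
  case: ifP => c1.
    rewrite /bf ifT //; lia.
  case: ifP => c2.
    set y := fun l => a' (i.+1 + l)%N.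
    set z := a' (i + (n - k))%N.
    transitivity (mu [tuple stf y z 0 l | l < n]).
      congr mu; apply: eq_mktuple => l /=.
      have hl := ltn_ord l.
      rewrite /bf /stf /y /z.
      clear E; dec; try done; try lia; try (congr a; lia); try (congr a'; lia).
    rewrite (st_all y z k) //.
    apply: ind_eq => l /=.
    have hl := ltn_ord l.
    case: (ltnP l (n - k)) => hlm.
      rewrite (nthT _ hlm) /= /stf /y /z.
      clear E; dec; try done; try lia; try (congr a; lia); try (congr a'; lia).
    rewrite /stf; clear E; dec; try done; try lia; try (congr a; lia).
  rewrite /bf ifF; last lia.
  rewrite ifF; last lia.
  rewrite ifT; last lia.
  congr (alpha _ (a' _)); lia.
rewrite ifF; last lia.
rewrite ifF; last lia.
rewrite /bf ifF; last lia.
rewrite ifF; last lia.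
rewrite ifF; last lia.
have -> : (2 * n - (j + n) = n - j)%N by lia.
apply: alpha_a; lia.
Qed.

End S.

Lemma map_mk (V : Type) (m : nat) (f : V -> V) (G : 'I_m -> V) :
  map_tuple f [tuple G j | j < m] = [tuple f (G j) | j < m].
Proof. by apply: eq_from_tnth => j; rewrite tnth_map !tnth_mktuple. Qed.

Theorem corollary3p5 (K : fieldType) (V : lmodType K)
  (n k : nat) (mu : n.-tuple V -> V) (alpha : nat -> V -> V) (a : nat -> V) :
  [pchar K] =i pred0 ->
  (3 <= n)%N ->
  total_hom_assoc_algebra mu alpha ->
  (k <= n - 2)%N ->
  (* (1) alpha_{n-i}(a_i) = a_i *)
  (forall i, (1 <= i <= k)%N -> alpha (n - i)%N (a i) = a i) ->
  (* (2) (x_1,...,x_{n-i},a_i,...,a_1) = (x_1,...,x_{n-i-1},a_i,x_{n-i},a_{i-1},...,a_1) *)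
  (forall i, (1 <= i <= k)%N -> forall x : nat -> V,
     mu [tuple (if (j.+1 <= n - i)%N then x j.+1 else a (n - j)%N) | j < n]
     = mu [tuple (if (j.+1 < n - i)%N then x j.+1
                  else if j.+1 == (n - i)%N then a i
                  else if j.+1 == (n - i).+1 then x (n - i)%N
                  else a (n - j)%N) | j < n]) ->
  total_hom_assoc_algebra (induced_op k mu a) alpha /\
  (hom_multiplicative mu alpha -> hom_multiplicative (induced_op k mu a) alpha).
Proof.
move=> _ n3 [[ML Hlin] HA] kn H1 H2.
split; last first.
  move=> [f [hf hm]]; exists f; split.
    move=> j hj; apply: hf; lia.
  move=> x; rewrite /induced_op hm map_mk; congr mu; apply: eq_mktuple => j /=.
  have hj := ltn_ord j.
  case: ifP => hjm.
    by rewrite (nth_map 0) // size_tuple.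
  have hj1 : (1 <= n - j <= k)%N by lia.
  have hj2 : (1 <= n - (n - j) <= n.-1)%N by lia.
  by rewrite -{2}(H1 _ hj1) (hf _ hj2).
split; last by apply: assoc_ind; eassumption.
split; last by move=> j hj; apply: Hlin; lia.
move=> x i c u v.
have hin : (i < n)%N by have := ltn_ord i; lia.
pose x' := fun j : 'I_n => if (j < n - k)%N then nth 0 [tuple x l | l < n - k] j else a (n - j)%N.
have E : forall w, induced_op k mu a [tuple (if j == i then w else x j) | j < n - k]
    = mu [tuple (if j == Ordinal hin then w else x' j) | j < n].
  move=> w; rewrite /induced_op; congr mu; apply: eq_mktuple => j /=.
  rewrite /x'; case: ifP => hjm.
    rewrite !(nthT _ hjm) -!val_eqE /=.
    by case: ifP.
  rewrite ifF // -val_eqE /=; apply/negbTE/eqP => ej.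
  have := ltn_ord i; lia.
by rewrite !E ML.
Qed.
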